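(* Let $N\ge1$, $c\in\mathbb{R}$, and consider the manifold of Jacobi parameters $a_1,\dots,a_{N-1}>0$, $b_1,\dots,b_N\in\mathbb{R}$ with $\sum_jb_j=c$, with the Poisson bracket described in the context. For $1\le n\le N$ let $P_n,Q_n$ be as in the context and $m_n(x)=-Q_n(x)/P_n(x)$. Then (wherever $P_n(y)\neq0$) \[ \{P_n(x),m_n(y)\}=\tfrac12\Bigl[Q_n(x)m_n(y)-\frac{P_n(x)m_n(y)+Q_n(x)}{x-y}\Bigr], \] \[ \{Q_n(x),m_n(y)\}=\tfrac12\Bigl[-Q_n(x)m_n(y)^2+m_n(y)\frac{P_n(x)m_n(y)+Q_n(x)}{x-y}\Bigr]. \]
   Context: The Poisson bracket is the bilinear antisymmetric bracket satisfying the Leibniz rule whose only nonzero brackets among the coordinates are $\{b_k,a_k\}=-\tfrac14 a_k$ ($k=1,\dots,N-1$) and $\{b_k,a_{k-1}\}=\tfrac14 a_{k-1}$ ($k=2,\dots,N$); auxiliary variables $x,y$ are held fixed. With $J(b_1,\dots,b_m;a_1,\dots,a_{m-1})$ the $m\times m$ tridiagonal symmetric matrix with diagonal $b_1,\dots,b_m$ and off-diagonal entries $a_1,\dots,a_{m-1}$: $P_n(x)=\det(x-J(b_1,\dots,b_n;a_1,\dots,a_{n-1}))$ and $Q_n(x)=\det(x-J(b_2,\dots,b_n;a_2,\dots,a_{n-1}))$. *)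

(* Defs.v *)
From HB Require Import structures.
From mathcomp Require Import all_boot all_order all_algebra.
From mathcomp Require Import all_classical all_reals all_analysis.
Set Implicit Arguments. Unset Strict Implicit. Unset Printing Implicit Defensive.
Import Order.TTheory GRing.Theory Num.Theory.
Local Open Scope ring_scope.

Section Defs.
Variable R : realType.

(* Coordinates: a k (k = 1..N-1) and b k (k = 1..N), 1-based, stored as
   sequences nat -> R (entries outside the index range are irrelevant). *)

Definition Jmat (m : nat) (b a : nat -> R) : 'M[R]_m :=
  \matrix_(i < m, j < m)
    (if i == j :> nat then b i.+1
     else if j == i.+1 :> nat then a i.+1
     else if i == j.+1 :> nat then a j.+1
     else 0).

Definition Ppoly (n : nat) (a b : nat -> R) (x : R) : R :=
  \det (x%:M - Jmat n b a).

Definition Qpoly (n : nat) (a b : nat -> R) (x : R) : R :=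
  \det (x%:M - Jmat n.-1 (fun k => b k.+1) (fun k => a k.+1)).

Definition mJac (n : nat) (a b : nat -> R) (y : R) : R :=
  - Qpoly n a b y / Ppoly n a b y.

Definition upd (s : nat -> R) (k : nat) (t : R) : nat -> R :=
  fun i => if i == k then t else s i.

Definition da (k : nat) (F : (nat -> R) -> (nat -> R) -> R) (a b : nat -> R) : R :=
  derive1 (fun t => F (upd a k t) b) (a k).
Definition db (k : nat) (F : (nat -> R) -> (nat -> R) -> R) (a b : nat -> R) : R :=
  derive1 (fun t => F a (upd b k t)) (b k).

(* The Poisson bracket: the bilinear antisymmetric Leibniz bracket
   {F,G} = sum_{u,v} dF/du dG/dv {u,v}, whose only nonzero coordinate
   brackets are {b_k,a_k} = -a_k/4 (k=1..N-1), {b_k,a_{k-1}} = a_{k-1}/4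
   (k=2..N). *)
Definition pbracket (N : nat) (F G : (nat -> R) -> (nat -> R) -> R)
    (a b : nat -> R) : R :=
  \sum_(1 <= k < N)
     (- (a k / 4)) * (db k F a b * da k G a b - da k F a b * db k G a b)
  + \sum_(2 <= k < N.+1)
     (a k.-1 / 4) * (db k F a b * da k.-1 G a b - da k.-1 F a b * db k G a b).

End Defs.

(* Main.v *)
Require Import Defs.
From HB Require Import structures.
From mathcomp Require Import all_boot all_order all_algebra.
From mathcomp Require Import all_classical all_reals all_analysis.
From mathcomp Require Import ring.

Set Implicit Arguments. Unset Strict Implicit. Unset Printing Implicit Defensive.
Import Order.TTheory GRing.Theory Num.Theory.
Local Open Scope ring_scope.

Definition sh {R : realType} (s : nat -> R) : nat -> R := fun k => s k.+1.

Lemma minor00 {R : realType} n (a b : nat -> R) x :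
  row' ord0 (col' ord0 (x%:M - Jmat n.+1 b a)) = x%:M - Jmat n (sh b) (sh a).
Proof.
apply/matrixP => i j; rewrite !mxE /= /bump /= !add1n /sh.
by rewrite !eqSS.
Qed.

Lemma Ppoly_rec {R : realType} n (a b : nat -> R) x :
  Ppoly n.+2 a b x = (x - b 1%N) * Ppoly n.+1 (sh a) (sh b) x
                     - a 1%N ^+ 2 * Ppoly n (sh (sh a)) (sh (sh b)) x.
Proof.
rewrite /Ppoly (expand_det_row _ ord0) big_ord_recl big_ord_recl big1; last first.
  by move=> i _; rewrite !mxE /= subr0 mulr0n mul0r.
rewrite addr0 /cofactor minor00 !mxE /=.
set M := row' _ _.
have -> : \det M = - a 1%N * \det (x%:M - Jmat n (sh (sh b)) (sh (sh a))).
  rewrite (expand_det_col _ ord0) big_ord_recl big1; last first.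
    by move=> i _; rewrite /M !mxE /= mulr0n subr0 mul0r.
  rewrite addr0 /cofactor /M !mxE /= /bump /= mulr0n sub0r expr0 mul1r mulNr.
  rewrite [RHS]mulNr; congr (- (_ * \det _)).
  by apply/matrixP => i j; rewrite !mxE /= /bump /= /sh !add1n !eqSS.
rewrite /Ppoly /bump /= mulr1n mulr0n sub0r expr0 expr1 mul1r.
by ring.
Qed.

Fixpoint PQ {R : realType} (n : nat) (a b : nat -> R) (x : R) : R * R :=
  match n with
  | 0 => (1, 0)
  | n'.+1 => let pq := PQ n' (sh a) (sh b) x in
             ((x - b 1%N) * pq.1 - a 1%N ^+ 2 * pq.2, pq.1)
  end.

Lemma Ppoly_PQ {R : realType} n (a b : nat -> R) x :
  Ppoly n a b x = (PQ n a b x).1.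
Proof.
suff H : forall n a b, Ppoly n a b x = (PQ n a b x).1 /\
                       Ppoly n.+1 a b x = (PQ n.+1 a b x).1 by case: (H n a b).
elim=> [|m IH] a' b'.
  split; first by rewrite /Ppoly det_mx00.
  by rewrite /Ppoly det_mx11 /= !mxE /= mulr1n mulr1 mulr0 subr0.
split; first by case: (IH a' b').
rewrite Ppoly_rec /=.
case: (IH (sh a') (sh b')) => H1 H2.
case: (IH (sh (sh a')) (sh (sh b'))) => H3 _.
by rewrite H2 H3.
Qed.

Lemma Qpoly_PQ {R : realType} n (a b : nat -> R) x :
  (1 <= n)%N -> Qpoly n a b x = (PQ n a b x).2.
Proof.
case: n => // n _. rewrite /= -Ppoly_PQ.
by [].
Qed.
Lemma isd_lin {R : realType} (f g : R -> R) (c1 c2 t0 df dg : R) :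
  is_derive t0 1 f df -> is_derive t0 1 g dg ->
  is_derive t0 1 (fun t => c1 * f t - c2 * g t) (c1 * df - c2 * dg).
Proof.
move=> Hf Hg.
have H := is_deriveB (is_deriveZ c1 Hf) (is_deriveZ c2 Hg).
exact: H.
Qed.

Lemma isd_cst {R : realType} (c t0 : R) : is_derive t0 1 (fun t => c) 0.
Proof. exact: is_derive_cst. Qed.

Lemma isd_id {R : realType} (t0 : R) : is_derive t0 1 (fun t => t) 1.
Proof. exact: is_derive_id. Qed.

Lemma isd_mul {R : realType} (f g : R -> R) (t0 df dg : R) :
  is_derive t0 1 f df -> is_derive t0 1 g dg ->
  is_derive t0 1 (fun t => f t * g t) (f t0 * dg + g t0 * df).
Proof.
move=> Hf Hg. have H := is_deriveM Hf Hg. exact: H.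
Qed.

Lemma isd_inv {R : realType} (f : R -> R) (t0 df : R) :
  f t0 != 0 -> is_derive t0 1 f df ->
  is_derive t0 1 (fun t => (f t)^-1) (- (f t0) ^- 2 * df).
Proof. move=> H1 H2. exact: is_deriveV. Qed.

Lemma isd_ext {R : realType} (f g : R -> R) (t0 df dg : R) :
  is_derive t0 1 f df -> (forall t, f t = g t) -> df = dg -> is_derive t0 1 g dg.
Proof. by move=> H E <-; have -> : g = f by apply: funext => t; rewrite E. Qed.

Lemma isd_derive1 {R : realType} (f : R -> R) (t0 df : R) :
  is_derive t0 1 f df -> derive1 f t0 = df.
Proof. by move=> H; rewrite derive1E derive_val. Qed.

Lemma sh_upd0 {R : realType} (s : nat -> R) t : sh (upd s 0 t) = sh s.
Proof. by apply: funext => i; rewrite /sh /upd. Qed.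

Lemma sh_updS {R : realType} (s : nat -> R) k t : sh (upd s k.+1 t) = upd (sh s) k t.
Proof. by apply: funext => i; rewrite /sh /upd eqSS. Qed.

Lemma upd_id {R : realType} (s : nat -> R) k : upd s k (s k) = s.
Proof. by apply: funext => i; rewrite /upd; case: eqP => // ->. Qed.

Lemma PQ_upd0a {R : realType} n (a b : nat -> R) x t :
  PQ n (upd a 0 t) b x = PQ n a b x.
Proof. by case: n => //= n; rewrite sh_upd0. Qed.

Lemma PQ_upd0b {R : realType} n (a b : nat -> R) x t :
  PQ n a (upd b 0 t) x = PQ n a b x.
Proof. by case: n => //= n; rewrite sh_upd0. Qed.

Fixpoint GA {R : realType} (n : nat) (a b : nat -> R) (x : R) : (nat -> R) * (nat -> R) :=
  match n with
  | 0 => (fun _ => 0, fun _ => 0)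
  | n'.+1 => let g := GA n' (sh a) (sh b) x in
             let pq := PQ n' (sh a) (sh b) x in
     (fun k => match k with
               | 0 => 0
               | 1 => - (2 * a 1%N * pq.2)
               | k'.+1 => (x - b 1%N) * g.1 k' - a 1%N ^+ 2 * g.2 k' end,
      fun k => match k with 0 => 0 | k'.+1 => g.1 k' end)
  end.

Fixpoint GB {R : realType} (n : nat) (a b : nat -> R) (x : R) : (nat -> R) * (nat -> R) :=
  match n with
  | 0 => (fun _ => 0, fun _ => 0)
  | n'.+1 => let g := GB n' (sh a) (sh b) x in
             let pq := PQ n' (sh a) (sh b) x in
     (fun k => match k with
               | 0 => 0
               | 1 => - pq.1
               | k'.+1 => (x - b 1%N) * g.1 k' - a 1%N ^+ 2 * g.2 k' end,
      fun k => match k with 0 => 0 | k'.+1 => g.1 k' end)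
  end.

Lemma dPQa {R : realType} n : forall (a b : nat -> R) (x : R) k (t0 : R),
  is_derive t0 1 (fun t => (PQ n (upd a k t) b x).1) ((GA n (upd a k t0) b x).1 k) /\
  is_derive t0 1 (fun t => (PQ n (upd a k t) b x).2) ((GA n (upd a k t0) b x).2 k).
Proof.
elim: n => [|n IH] a b x k t0.
  by split; apply: isd_cst.
case: k => [|k].
  split.
    apply: (isd_ext (isd_cst (PQ n.+1 a b x).1 t0)); last by [].
    by move=> t; rewrite PQ_upd0a.
  apply: (isd_ext (isd_cst (PQ n.+1 a b x).2 t0)); last by [].
  by move=> t; rewrite PQ_upd0a.
have E : forall t, PQ n.+1 (upd a k.+1 t) b x =
   ((x - b 1%N) * (PQ n (upd (sh a) k t) (sh b) x).1
     - upd a k.+1 t 1%N ^+ 2 * (PQ n (upd (sh a) k t) (sh b) x).2,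
    (PQ n (upd (sh a) k t) (sh b) x).1).
  by move=> t; rewrite /= sh_updS.
have G1 : (GA n.+1 (upd a k.+1 t0) b x).2 k.+1 = (GA n (upd (sh a) k t0) (sh b) x).1 k.
  by rewrite /= sh_updS.
case: (IH (sh a) (sh b) x k t0) => H1 H2.
split; last first.
  apply: (isd_ext H1); last by rewrite G1.
  by move=> t; rewrite E.
case: k E G1 H1 H2 => [|k] E G1 H1 H2.
  apply: (isd_ext (isd_lin (x - b 1%N) 1 (isd_cst (PQ n (sh a) (sh b) x).1 t0)
        (isd_mul (isd_mul (isd_id t0) (isd_id t0)) (isd_cst (PQ n (sh a) (sh b) x).2 t0)))).
    by move=> t; rewrite E /= !PQ_upd0a /upd /= expr2 mul1r.
  by rewrite /= sh_updS PQ_upd0a /upd /=; ring.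
apply: (isd_ext (isd_lin (x - b 1%N) (a 1%N ^+ 2) H1 H2)).
  by move=> t; rewrite E.
by rewrite /= sh_updS.
Qed.

Lemma dPQb {R : realType} n : forall (a b : nat -> R) (x : R) k (t0 : R),
  is_derive t0 1 (fun t => (PQ n a (upd b k t) x).1) ((GB n a (upd b k t0) x).1 k) /\
  is_derive t0 1 (fun t => (PQ n a (upd b k t) x).2) ((GB n a (upd b k t0) x).2 k).
Proof.
elim: n => [|n IH] a b x k t0.
  by split; apply: isd_cst.
case: k => [|k].
  split.
    apply: (isd_ext (isd_cst (PQ n.+1 a b x).1 t0)); last by [].
    by move=> t; rewrite PQ_upd0b.
  apply: (isd_ext (isd_cst (PQ n.+1 a b x).2 t0)); last by [].
  by move=> t; rewrite PQ_upd0b.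
have E : forall t, PQ n.+1 a (upd b k.+1 t) x =
   ((x - upd b k.+1 t 1%N) * (PQ n (sh a) (upd (sh b) k t) x).1
     - a 1%N ^+ 2 * (PQ n (sh a) (upd (sh b) k t) x).2,
    (PQ n (sh a) (upd (sh b) k t) x).1).
  by move=> t; rewrite /= sh_updS.
have G1 : (GB n.+1 a (upd b k.+1 t0) x).2 k.+1 = (GB n (sh a) (upd (sh b) k t0) x).1 k.
  by rewrite /= sh_updS.
case: (IH (sh a) (sh b) x k t0) => H1 H2.
split; last first.
  apply: (isd_ext H1); last by rewrite G1.
  by move=> t; rewrite E.
case: k E G1 H1 H2 => [|k] E G1 H1 H2.
  set p := (PQ n (sh a) (sh b) x).1.
  set q := (PQ n (sh a) (sh b) x).2.
  apply: (isd_ext (isd_lin (- p) (-1) (isd_id t0) (isd_cst (x * p - a 1%N ^+ 2 * q) t0))).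
    by move=> t; rewrite E /= !PQ_upd0b /upd /= -/p -/q; ring.
  by rewrite /= sh_updS PQ_upd0b /upd /= -/p; ring.
apply: (isd_ext (isd_lin (x - b 1%N) (a 1%N ^+ 2) H1 H2)).
  by move=> t; rewrite E.
by rewrite /= sh_updS.
Qed.

Lemma GA0 {R : realType} n (a b : nat -> R) x : (GA n a b x).1 0 = 0 /\ (GA n a b x).2 0 = 0.
Proof. by case: n. Qed.
Lemma GB0 {R : realType} n (a b : nat -> R) x : (GB n a b x).1 0 = 0 /\ (GB n a b x).2 0 = 0.
Proof. by case: n. Qed.

Lemma GB1 {R : realType} n (a b : nat -> R) x :
  (GB n a b x).1 1%N = - (PQ n a b x).2 /\ (GB n a b x).2 1%N = 0.
Proof. case: n => [|n] /=; first by rewrite oppr0. by case: (GB0 n (sh a) (sh b) x). Qed.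

Lemma daP {R : realType} n k (a b : nat -> R) x :
  da k (fun a' b' => (PQ n a' b' x).1) a b = (GA n a b x).1 k.
Proof.
rewrite /da. case: (dPQa n a b x k (a k)) => H _.
by rewrite (isd_derive1 H) upd_id.
Qed.
Lemma daQ {R : realType} n k (a b : nat -> R) x :
  da k (fun a' b' => (PQ n a' b' x).2) a b = (GA n a b x).2 k.
Proof.
rewrite /da. case: (dPQa n a b x k (a k)) => _ H.
by rewrite (isd_derive1 H) upd_id.
Qed.
Lemma dbP {R : realType} n k (a b : nat -> R) x :
  db k (fun a' b' => (PQ n a' b' x).1) a b = (GB n a b x).1 k.
Proof.
rewrite /db. case: (dPQb n a b x k (b k)) => H _.
by rewrite (isd_derive1 H) upd_id.
Qed.
Lemma dbQ {R : realType} n k (a b : nat -> R) x :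
  db k (fun a' b' => (PQ n a' b' x).2) a b = (GB n a b x).2 k.
Proof.
rewrite /db. case: (dPQb n a b x k (b k)) => _ H.
by rewrite (isd_derive1 H) upd_id.
Qed.

Definition brk {R : realType} (N : nat) (a Fa Fb Ga Gb : nat -> R) : R :=
  \sum_(1 <= k < N) (- (a k / 4)) * (Fb k * Ga k - Fa k * Gb k)
  + \sum_(2 <= k < N.+1) (a k.-1 / 4) * (Fb k * Ga k.-1 - Fa k.-1 * Gb k).

Lemma brk_linr {R : realType} N (a Fa Fb G1a G1b G2a G2b : nat -> R) (u v : R) :
  brk N a Fa Fb (fun k => u * G1a k + v * G2a k) (fun k => u * G1b k + v * G2b k)
  = u * brk N a Fa Fb G1a G1b + v * brk N a Fa Fb G2a G2b.
Proof.
rewrite /brk !mulrDr !big_distrr /= addrACA -!big_split /=.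
by congr (_ + _); apply: eq_bigr => k _; ring.
Qed.

Lemma brk_anti {R : realType} N (a Fa Fb Ga Gb : nat -> R) :
  brk N a Fa Fb Ga Gb = - brk N a Ga Gb Fa Fb.
Proof.
rewrite /brk opprD -!sumrN.
by congr (_ + _); apply: eq_bigr => k _; ring.
Qed.

Lemma brk_self {R : realType} N (a Fa Fb : nat -> R) : brk N a Fa Fb Fa Fb = 0.
Proof.
rewrite /brk !big1 ?addr0 // => k _; by rewrite [Fb k * _]mulrC subrr mulr0.
Qed.

Lemma brk_congr {R : realType} N (a Fa Fb Ga Gb Fa' Fb' Ga' Gb' : nat -> R) :
  (forall k, (1 <= k)%N -> [/\ Fa k = Fa' k, Fb k = Fb' k, Ga k = Ga' k & Gb k = Gb' k]) ->
  brk N a Fa Fb Ga Gb = brk N a Fa' Fb' Ga' Gb'.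
Proof.
move=> H; rewrite /brk; congr (_ + _); apply: eq_big_nat => k /andP [Hk _].
  by case: (H k Hk) => -> -> -> ->.
case: (H k (ltnW Hk)) => _ -> _ ->.
have Hk' : (1 <= k.-1)%N by case: k Hk => [|[|k]].
by case: (H k.-1 Hk') => -> _ -> _.
Qed.

Lemma brk_shift {R : realType} M (a Fa Fb Ga Gb : nat -> R) :
  brk M.+2 a Fa Fb Ga Gb =
    - (a 1%N / 4) * (Fb 1%N * Ga 1%N - Fa 1%N * Gb 1%N)
    + (a 1%N / 4) * (Fb 2%N * Ga 1%N - Fa 1%N * Gb 2%N)
    + brk M.+1 (sh a) (sh Fa) (sh Fb) (sh Ga) (sh Gb).
Proof.
rewrite /brk (@big_ltn _ _ _ 1 M.+2) // (@big_ltn _ _ _ 2 M.+3) // !big_add1 /=.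
by rewrite /sh; ring.
Qed.

Lemma brk_small {R : realType} N (a Fa Fb Ga Gb : nat -> R) :
  (N <= 1)%N -> brk N a Fa Fb Ga Gb = 0.
Proof.
by case: N => [|[|N]] // _; rewrite /brk !big_geq // addr0.
Qed.

Lemma brk_lin2 {R : realType} N (a A1 A2 B1 B2 C1 C2 D1 D2 Fa Fb Ga Gb : nat -> R)
    (u v u' v' : R) :
  (forall k, (1 <= k)%N -> [/\ Fa k = u * A1 k + v * A2 k, Fb k = u * B1 k + v * B2 k,
                             Ga k = u' * C1 k + v' * C2 k & Gb k = u' * D1 k + v' * D2 k]) ->
  brk N a Fa Fb Ga Gb =
    u * u' * brk N a A1 B1 C1 D1 + u * v' * brk N a A1 B1 C2 D2
    + v * u' * brk N a A2 B2 C1 D1 + v * v' * brk N a A2 B2 C2 D2.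
Proof.
move=> H.
rewrite (@brk_congr _ N a Fa Fb Ga Gb (fun k => u * A1 k + v * A2 k) (fun k => u * B1 k + v * B2 k)
   (fun k => u' * C1 k + v' * C2 k) (fun k => u' * D1 k + v' * D2 k)) //.
rewrite brk_linr (brk_anti _ _ _ _ C1 D1) (brk_anti _ _ _ _ C2 D2) !brk_linr.
rewrite (brk_anti _ _ C1 D1 A1 B1) (brk_anti _ _ C1 D1 A2 B2).
rewrite (brk_anti _ _ C2 D2 A1 B1) (brk_anti _ _ C2 D2 A2 B2).
ring.
Qed.

Lemma brk_zero {R : realType} N (a Fa Fb : nat -> R) :
  brk N a Fa Fb (fun _ => 0) (fun _ => 0) = 0.
Proof. by rewrite /brk !big1 ?addr0 // => k _; rewrite !mulr0 subrr mulr0. Qed.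

Lemma vals {R : realType} n (a b : nat -> R) x :
  [/\ (GA n.+1 a b x).1 1%N = - (2 * a 1%N * (PQ n (sh a) (sh b) x).2),
      (GA n.+1 a b x).2 1%N = 0,
      (GB n.+1 a b x).1 1%N = - (PQ n (sh a) (sh b) x).1,
      (GB n.+1 a b x).2 1%N = 0 &
      (GB n.+1 a b x).1 2%N = - ((x - b 1%N) * (PQ n (sh a) (sh b) x).2) /\
      (GB n.+1 a b x).2 2%N = - (PQ n (sh a) (sh b) x).2].
Proof.
case: (GA0 n (sh a) (sh b) x) => A1 A2.
case: (GB0 n (sh a) (sh b) x) => B1 B2.
case: (GB1 n (sh a) (sh b) x) => C1 C2.
rewrite /= A1 B1 C1 C2; split => //; split => //; ring.
Qed.

Lemma shcomb {R : realType} n (a b : nat -> R) x k : (1 <= k)%N ->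
  [/\ (GA n.+1 a b x).1 k.+1 = (x - b 1%N) * (GA n (sh a) (sh b) x).1 k
                               + (- a 1%N ^+ 2) * (GA n (sh a) (sh b) x).2 k,
      (GB n.+1 a b x).1 k.+1 = (x - b 1%N) * (GB n (sh a) (sh b) x).1 k
                               + (- a 1%N ^+ 2) * (GB n (sh a) (sh b) x).2 k,
      (GA n.+1 a b x).2 k.+1 = 1 * (GA n (sh a) (sh b) x).1 k + 0 * (GA n (sh a) (sh b) x).2 k &
      (GB n.+1 a b x).2 k.+1 = 1 * (GB n (sh a) (sh b) x).1 k + 0 * (GB n (sh a) (sh b) x).2 k].
Proof. by case: k => // k _; rewrite /=; split; ring. Qed.

Definition InvP {R : realType} n N (a b : nat -> R) (x y : R) : Prop :=
  [/\ brk N a (GA n a b x).1 (GB n a b x).1 (GA n a b y).1 (GB n a b y).1 = 0,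
      brk N a (GA n a b x).2 (GB n a b x).2 (GA n a b y).2 (GB n a b y).2 = 0 &
      (x - y) * brk N a (GA n a b x).1 (GB n a b x).1 (GA n a b y).2 (GB n a b y).2
      = 1 / 2 * ((x - y) * (PQ n a b x).2 * (PQ n a b y).2
                 + (PQ n a b x).2 * (PQ n a b y).1 - (PQ n a b x).1 * (PQ n a b y).2)].

Lemma inv_all {R : realType} n : forall N (a b : nat -> R) x y, (n <= N)%N -> InvP n N a b x y.
Proof.
elim: n => [|n IH] N a b x y HnN.
  by split; rewrite /= ?brk_zero ?mulr0 //; ring.
case: N HnN => [//|[|M]] HnN.
  have -> : n = 0%N by case: n HnN IH.
  by split; rewrite ?brk_small ?mulr0 //=; ring.
have HnM : (n <= M.+1)%N by [].
case: (eqVneq x y) => [<-|Hxy].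
  split; rewrite ?brk_self // subrr !mul0r add0r; ring.
case: (IH M.+1 (sh a) (sh b) x y HnM) => I1 I2 I3.
case: (IH M.+1 (sh a) (sh b) y x HnM) => _ _ I4.
set Bpq := brk M.+1 (sh a) (GA n (sh a) (sh b) x).1 (GB n (sh a) (sh b) x).1
                           (GA n (sh a) (sh b) y).2 (GB n (sh a) (sh b) y).2 in I3.
set Bqp := brk M.+1 (sh a) (GA n (sh a) (sh b) y).1 (GB n (sh a) (sh b) y).1
                           (GA n (sh a) (sh b) x).2 (GB n (sh a) (sh b) x).2 in I4.
have Hxy' : x - y != 0 by rewrite subr_eq0.
have Hyx' : y - x != 0 by rewrite subr_eq0 eq_sym.
have E1 : Bpq = (1 / 2 * ((x - y) * (PQ n (sh a) (sh b) x).2 * (PQ n (sh a) (sh b) y).2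
                 + (PQ n (sh a) (sh b) x).2 * (PQ n (sh a) (sh b) y).1
                 - (PQ n (sh a) (sh b) x).1 * (PQ n (sh a) (sh b) y).2)) / (x - y).
  by rewrite -I3 [_ * Bpq]mulrC mulfK.
have E2 : Bqp = (1 / 2 * ((y - x) * (PQ n (sh a) (sh b) y).2 * (PQ n (sh a) (sh b) x).2
                 + (PQ n (sh a) (sh b) y).2 * (PQ n (sh a) (sh b) x).1
                 - (PQ n (sh a) (sh b) y).1 * (PQ n (sh a) (sh b) x).2)) / (y - x).
  by rewrite -I4 [_ * Bqp]mulrC mulfK.
have E3 : brk M.+1 (sh a) (GA n (sh a) (sh b) x).2 (GB n (sh a) (sh b) x).2
                           (GA n (sh a) (sh b) y).1 (GB n (sh a) (sh b) y).1 = - Bqp.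
  by rewrite brk_anti.
have E4 : brk M.+1 (sh a) (GA n (sh a) (sh b) y).1 (GB n (sh a) (sh b) y).1
                           (GA n (sh a) (sh b) x).1 (GB n (sh a) (sh b) x).1 = 0.
  by rewrite brk_anti I1 oppr0.
case: (vals n a b x) => Xa1 Xa2 Xb1 Xb2 [Xc1 Xc2].
case: (vals n a b y) => Ya1 Ya2 Yb1 Yb2 [Yc1 Yc2].
split; rewrite brk_shift.
- rewrite (@brk_lin2 _ M.+1 (sh a) (GA n (sh a) (sh b) x).1 (GA n (sh a) (sh b) x).2
     (GB n (sh a) (sh b) x).1 (GB n (sh a) (sh b) x).2 (GA n (sh a) (sh b) y).1
     (GA n (sh a) (sh b) y).2 (GB n (sh a) (sh b) y).1 (GB n (sh a) (sh b) y).2 _ _ _ _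
     (x - b 1%N) (- a 1%N ^+ 2) (y - b 1%N) (- a 1%N ^+ 2)); last first.
    move=> k Hk; case: (shcomb n a b x Hk) => ? ? _ _; case: (shcomb n a b y Hk) => ? ? _ _.
    by split.
  rewrite -/Bpq I1 E3 I2 Xa1 Xb1 Xc1 Ya1 Yb1 Yc1 E1 E2.
  by field; rewrite Hxy' Hyx'.
- rewrite (@brk_lin2 _ M.+1 (sh a) (GA n (sh a) (sh b) x).1 (GA n (sh a) (sh b) x).2
     (GB n (sh a) (sh b) x).1 (GB n (sh a) (sh b) x).2 (GA n (sh a) (sh b) y).1
     (GA n (sh a) (sh b) y).2 (GB n (sh a) (sh b) y).1 (GB n (sh a) (sh b) y).2 _ _ _ _
     1 0 1 0); last first.
    move=> k Hk; case: (shcomb n a b x Hk) => _ _ ? ?; case: (shcomb n a b y Hk) => _ _ ? ?.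
    by split.
  rewrite I1 Xa2 Xb2 Ya2 Yb2; ring.
- rewrite (@brk_lin2 _ M.+1 (sh a) (GA n (sh a) (sh b) x).1 (GA n (sh a) (sh b) x).2
     (GB n (sh a) (sh b) x).1 (GB n (sh a) (sh b) x).2 (GA n (sh a) (sh b) y).1
     (GA n (sh a) (sh b) y).2 (GB n (sh a) (sh b) y).1 (GB n (sh a) (sh b) y).2 _ _ _ _
     (x - b 1%N) (- a 1%N ^+ 2) 1 0); last first.
    move=> k Hk; case: (shcomb n a b x Hk) => ? ? _ _; case: (shcomb n a b y Hk) => _ _ ? ?.
    by split.
  rewrite -/Bpq I1 E3 I2 Xa1 Xb1 Xc1 Ya2 Yb2 Yc2 E1 E2 /=.
  by field; rewrite Hxy' Hyx'.
Qed.

Lemma daM {R : realType} n k (a b : nat -> R) y :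
  (PQ n a b y).1 != 0 ->
  da k (fun a' b' => - (PQ n a' b' y).2 / (PQ n a' b' y).1) a b =
  (- ((PQ n a b y).1)^-1) * (GA n a b y).2 k
  + ((PQ n a b y).2 / (PQ n a b y).1 ^+ 2) * (GA n a b y).1 k.
Proof.
move=> H0; rewrite /da.
case: (dPQa n a b y k (a k)) => Hp Hq.
have H0' : (PQ n (upd a k (a k)) b y).1 != 0 by rewrite upd_id.
have D : is_derive (a k) 1 (fun t => - (PQ n (upd a k t) b y).2 / (PQ n (upd a k t) b y).1)
  ((- ((PQ n a b y).1)^-1) * (GA n a b y).2 k
  + ((PQ n a b y).2 / (PQ n a b y).1 ^+ 2) * (GA n a b y).1 k).
  apply: (isd_ext (isd_lin (-1) 0 (isd_mul Hq (isd_inv H0' Hp)) (isd_cst 0 (a k)))).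
    by move=> t /=; rewrite mulN1r mul0r subr0 mulNr.
  rewrite upd_id; field.
  by rewrite H0.
by rewrite (isd_derive1 D).
Qed.

Lemma dbM {R : realType} n k (a b : nat -> R) y :
  (PQ n a b y).1 != 0 ->
  db k (fun a' b' => - (PQ n a' b' y).2 / (PQ n a' b' y).1) a b =
  (- ((PQ n a b y).1)^-1) * (GB n a b y).2 k
  + ((PQ n a b y).2 / (PQ n a b y).1 ^+ 2) * (GB n a b y).1 k.
Proof.
move=> H0; rewrite /db.
case: (dPQb n a b y k (b k)) => Hp Hq.
have H0' : (PQ n a (upd b k (b k)) y).1 != 0 by rewrite upd_id.
have D : is_derive (b k) 1 (fun t => - (PQ n a (upd b k t) y).2 / (PQ n a (upd b k t) y).1)
  ((- ((PQ n a b y).1)^-1) * (GB n a b y).2 k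
  + ((PQ n a b y).2 / (PQ n a b y).1 ^+ 2) * (GB n a b y).1 k).
  apply: (isd_ext (isd_lin (-1) 0 (isd_mul Hq (isd_inv H0' Hp)) (isd_cst 0 (b k)))).
    by move=> t /=; rewrite mulN1r mul0r subr0 mulNr.
  rewrite upd_id; field.
  by rewrite H0.
by rewrite (isd_derive1 D).
Qed.

Unset Implicit Arguments.

Theorem theorem12p1 (R : realType) (N : nat) (c : R) (a b : nat -> R)
    (n : nat) (x y : R) :
  (1 <= N)%N ->
  (forall k, (1 <= k < N)%N -> 0 < a k) ->
  \sum_(1 <= j < N.+1) b j = c ->
  (1 <= n <= N)%N ->
  Ppoly n a b y != 0 ->
  x != y ->
  pbracket N (fun a' b' => Ppoly n a' b' x) (fun a' b' => mJac n a' b' y) a b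
    = 1 / 2 * (Qpoly n a b x * mJac n a b y
               - (Ppoly n a b x * mJac n a b y + Qpoly n a b x) / (x - y))
  /\
  pbracket N (fun a' b' => Qpoly n a' b' x) (fun a' b' => mJac n a' b' y) a b
    = 1 / 2 * (- Qpoly n a b x * mJac n a b y ^+ 2
               + mJac n a b y * (Ppoly n a b x * mJac n a b y + Qpoly n a b x)
                 / (x - y)).
Proof.
move=> _ _ _ /andP [Hn1 HnN] HPy Hxy.
have EP : forall (a' b' : nat -> R) z, Ppoly n a' b' z = (PQ n a' b' z).1.
  by move=> *; apply: Ppoly_PQ.
have EQ : forall (a' b' : nat -> R) z, Qpoly n a' b' z = (PQ n a' b' z).2.
  by move=> *; apply: Qpoly_PQ.
have EM : (fun a' b' => mJac n a' b' y) = (fun a' b' => - (PQ n a' b' y).2 / (PQ n a' b' y).1).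
  by apply: funext => a'; apply: funext => b'; rewrite /mJac EP EQ mulNr.
have EFP : (fun a' b' => Ppoly n a' b' x) = (fun a' b' => (PQ n a' b' x).1).
  by apply: funext => a'; apply: funext => b'; rewrite EP.
have EFQ : (fun a' b' => Qpoly n a' b' x) = (fun a' b' => (PQ n a' b' x).2).
  by apply: funext => a'; apply: funext => b'; rewrite EQ.
rewrite EM EFP EFQ /mJac !EP !EQ.
rewrite EP in HPy.
have Hbr : forall F G, pbracket N F G a b = brk N a (fun k => da k F a b) (fun k => db k F a b)
                                         (fun k => da k G a b) (fun k => db k G a b) by [].
rewrite !Hbr.
have -> : (fun k => da k (fun a' b' => (PQ n a' b' x).1) a b) = (GA n a b x).1.
  by apply: funext => k; rewrite daP.
have -> : (fun k => db k (fun a' b' => (PQ n a' b' x).1) a b) = (GB n a b x).1.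
  by apply: funext => k; rewrite dbP.
have -> : (fun k => da k (fun a' b' => (PQ n a' b' x).2) a b) = (GA n a b x).2.
  by apply: funext => k; rewrite daQ.
have -> : (fun k => db k (fun a' b' => (PQ n a' b' x).2) a b) = (GB n a b x).2.
  by apply: funext => k; rewrite dbQ.
have -> : (fun k => da k (fun a' b' => - (PQ n a' b' y).2 / (PQ n a' b' y).1) a b) =
   (fun k => (- ((PQ n a b y).1)^-1) * (GA n a b y).2 k
  + ((PQ n a b y).2 / (PQ n a b y).1 ^+ 2) * (GA n a b y).1 k).
  by apply: funext => k; rewrite daM.
have -> : (fun k => db k (fun a' b' => - (PQ n a' b' y).2 / (PQ n a' b' y).1) a b) =
   (fun k => (- ((PQ n a b y).1)^-1) * (GB n a b y).2 k
  + ((PQ n a b y).2 / (PQ n a b y).1 ^+ 2) * (GB n a b y).1 k).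
  by apply: funext => k; rewrite dbM.
rewrite !brk_linr.
case: (@inv_all R n N a b x y HnN) => I1 I2 I3.
case: (@inv_all R n N a b y x HnN) => _ _ I4.
have Hxy' : x - y != 0 by rewrite subr_eq0.
have Hyx' : y - x != 0 by rewrite subr_eq0 eq_sym.
set Bpq := brk N a (GA n a b x).1 (GB n a b x).1 (GA n a b y).2 (GB n a b y).2 in I3 *.
set Bqp := brk N a (GA n a b y).1 (GB n a b y).1 (GA n a b x).2 (GB n a b x).2 in I4.
have E1 : Bpq = (1 / 2 * ((x - y) * (PQ n a b x).2 * (PQ n a b y).2
                 + (PQ n a b x).2 * (PQ n a b y).1
                 - (PQ n a b x).1 * (PQ n a b y).2)) / (x - y).
  by rewrite -I3 [_ * Bpq]mulrC mulfK.
have E2 : Bqp = (1 / 2 * ((y - x) * (PQ n a b y).2 * (PQ n a b x).2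
                 + (PQ n a b y).2 * (PQ n a b x).1
                 - (PQ n a b y).1 * (PQ n a b x).2)) / (y - x).
  by rewrite -I4 [_ * Bqp]mulrC mulfK.
have E3 : brk N a (GA n a b x).2 (GB n a b x).2 (GA n a b y).1 (GB n a b y).1 = - Bqp.
  by rewrite brk_anti.
rewrite I1 I2 E3 E1 E2.
by split; field; rewrite ?HPy ?Hxy' ?Hyx'.
Qed.
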